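(* Let $m\ge 2$, let $J\subseteq\{1,\dots,m\}$ with $|J|\ge 2$, and let $i,j$ be distinct elements of $J$. Then the matrix $\mathrm{diag}(\theta_{ij}(J),1,1,\dots)\in \mathrm{GL}_\infty(\mathbb S_m)$ belongs to $E_\infty(\mathbb S_m)$. Equivalently (with $n=m+1$ and the identification below), for every $J\subseteq\{1,\dots,n\}$ with $n\in J$, $|J|\ge3$, and distinct $i,j\in J\setminus\{n\}$, the unit $\theta_{ij}(J)\in(1+\mathfrak p_n)^*=\mathrm{GL}_\infty(\mathbb S_{n-1})$ lies in $E_\infty(\mathbb S_{n-1})$.
   Context: $K$ is a field. For $n\ge1$, $\mathbb S_n$ is the $K$-algebra generated by $x_1,\dots,x_n,y_1,\dots,y_n$ subject to $y_ix_i=1$ for all $i$ and $[x_i,y_j]=[x_i,x_j]=[y_i,y_j]=0$ for $i\ne j$. For $i\in\{1,\dots,n\}$ and $s,t\in\mathbb N$ put $E_{st}(i):=x_i^sy_i^t-x_i^{s+1}y_i^{t+1}$ (these satisfy $E_{st}(i)E_{uv}(i)=\delta_{tu}E_{sv}(i)$), $e_i:=E_{00}(i)=1-x_iy_i$, and $e_I:=\prod_{i\in I}e_i$ for $I\subseteq\{1,\dots,n\}$. For $J\subseteq\{1,\dots,n\}$ with $|J|\ge2$ and distinct $i,j\in J$, $\theta_{ij}(J):=(1+(y_i-1)e_{J\setminus\{i\}})(1+(x_j-1)e_{J\setminus\{j\}})$; it is a unit of $\mathbb S_n$. $\mathfrak p_n$ denotes the ideal of $\mathbb S_n$ generated by $e_n$,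 and $(1+\mathfrak p_n)^*$ the group of units of $\mathbb S_n$ lying in $1+\mathfrak p_n$. $\mathbb S_{n-1}$ is identified with the subalgebra of $\mathbb S_n$ generated by $x_1,\dots,x_{n-1},y_1,\dots,y_{n-1}$, and $\mathrm{GL}_\infty(\mathbb S_{n-1})$ is identified with $(1+\mathfrak p_n)^*$ via the group isomorphism $(a_{kl})\mapsto 1+\sum_{k,l}(a_{kl}-\delta_{kl})E_{kl}(n)$. For a ring $A$, $\mathrm{GL}_\infty(A)$ and $E_\infty(A)$ are the stable general linear group and its subgroup generated by elementary matrices $1+aE_{kl}$ ($a\in A$, $k\neq l$). *)

(* Defs.v *)
From HB Require Import structures.
From mathcomp Require Import all_boot all_order all_algebra.
Set Implicit Arguments. Unset Strict Implicit. Unset Printing Implicit Defensive.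
Import GRing.Theory.
Local Open Scope ring_scope.

(* Indices {1,...,m} are represented by 'I_m. *)

Definition jacobson_rel (A : nzRingType) (m : nat) (x y : 'I_m -> A) : Prop :=
  (forall i, y i * x i = 1) /\
  (forall i j, i != j ->
     [/\ x i * y j = y j * x i, x i * x j = x j * x i & y i * y j = y j * y i]).

Definition is_alg_hom (K : fieldType) (A B : algType K) (f : A -> B) : Prop :=
  [/\ forall a b, f (a + b) = f a + f b,
      forall a b, f (a * b) = f a * f b,
      f 1 = 1 &
      forall (k : K) a, f (k *: a) = k *: f a].

(* (A, x, y) is THE K-algebra generated by x_i, y_i subject to the relations,
   i.e. it satisfies the relations and is initial among such data
   (universal property of the presentation); hence A is isomorphic to S_m. *)
Definition is_jacobson_algebra (K : fieldType) (m : nat) (A : algType K)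
    (x y : 'I_m -> A) : Prop :=
  jacobson_rel x y /\
  forall (B : algType K) (xb yb : 'I_m -> B), jacobson_rel xb yb ->
    exists f : A -> B,
      [/\ is_alg_hom f,
          (forall i, f (x i) = xb i /\ f (y i) = yb i) &
          forall g : A -> B, is_alg_hom g ->
            (forall i, g (x i) = xb i /\ g (y i) = yb i) -> forall a, g a = f a].

(* e_i = 1 - x_i y_i and e_I = prod_{i in I} e_i (the e_i commute). *)
Definition jac_e (A : nzRingType) m (x y : 'I_m -> A) (i : 'I_m) : A :=
  1 - x i * y i.
Definition jac_eI (A : nzRingType) m (x y : 'I_m -> A) (I : {set 'I_m}) : A :=
  \prod_(i in I) jac_e x y i.

Definition theta (A : nzRingType) m (x y : 'I_m -> A) (J : {set 'I_m})
    (i j : 'I_m) : A :=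
  (1 + (y i - 1) * jac_eI x y (J :\ i)) * (1 + (x j - 1) * jac_eI x y (J :\ j)).

Definition elem_mx (A : nzRingType) N (k l : 'I_N) (a : A) : 'M[A]_N :=
  \matrix_(p, q) ((p == q)%:R + (if (p == k) && (q == l) then a else 0)).

(* E_N(A): the subgroup of GL_N(A) generated by elementary matrices 1 + a E_kl,
   k <> l (closed under inverses, so = finite products of such matrices). *)
Definition in_E (A : nzRingType) N (M : 'M[A]_N) : Prop :=
  exists s : seq ('I_N * 'I_N * A),
    all (fun t => t.1.1 != t.1.2) s /\
    M = foldr (fun t acc => elem_mx t.1.1 t.1.2 t.2 *m acc) 1%:M s.

Definition diag1 (A : nzRingType) N (a : A) : 'M[A]_N.+1 :=
  \matrix_(p, q) (if p == q then (if p == ord0 then a else 1) else 0).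

(* diag(a,1,1,...) in GL_oo(A) lies in E_oo(A) = union of the E_N(A). *)
Definition diag_in_Einf (A : nzRingType) (a : A) : Prop :=
  exists N : nat, in_E (diag1 N a).

(* Main.v *)
Require Import Defs.
From HB Require Import structures.
From mathcomp Require Import all_boot all_order all_algebra.
Set Implicit Arguments. Unset Strict Implicit. Unset Printing Implicit Defensive.
Import GRing.Theory.
Local Open Scope ring_scope.



Section E.
Variable R : nzRingType.

Lemma foldr_mul N (s : seq ('I_N * 'I_N * R)) (M : 'M[R]_N) :
  foldr (fun t acc => elem_mx t.1.1 t.1.2 t.2 *m acc) 1%:M s *m M =
  foldr (fun t acc => elem_mx t.1.1 t.1.2 t.2 *m acc) M s.
Proof. elim: s => [|t s IH] /=; first by rewrite mul1mx. by rewrite -mulmxA IH. Qed.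

Lemma inE_mul N (M1 M2 : 'M[R]_N) : in_E M1 -> in_E M2 -> in_E (M1 *m M2).
Proof.
move=> [s1 [h1 ->]] [s2 [h2 ->]]; exists (s1 ++ s2); split.
  by rewrite all_cat h1 h2.
by rewrite foldr_mul foldr_cat.
Qed.

Lemma inE_1 N : in_E (1%:M : 'M[R]_N).
Proof. by exists [::]. Qed.

Lemma inE_elem N (k l : 'I_N) (a : R) : k != l -> in_E (elem_mx k l a).
Proof. by move=> kl; exists [:: (k, l, a)]; rewrite /= mulmx1 kl. Qed.

Lemma elem_mxE N (k l : 'I_N) (a : R) : elem_mx k l a = 1%:M + a *: delta_mx k l.
Proof.
apply/matrixP=> p q; rewrite !mxE; congr (_ + _).
by case: (_ && _); rewrite ?mulr1 ?mulr0.
Qed.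

Lemma inE_U n (Z : 'M[R]_n) : in_E (block_mx 1%:M Z 0 1%:M : 'M_(n + n)).
Proof.
rewrite (matrix_sum_delta Z).
elim/big_ind: _ => [||i _].
- by rewrite -scalar_mx_block; apply: inE_1.
- move=> Z1 Z2 h1 h2; have := inE_mul h1 h2.
  by rewrite mulmx_block !mulmx0 !mul0mx !mul1mx !mulmx1 !addr0 !add0r addrC.
elim/big_ind: _ => [||j _].
- by rewrite -scalar_mx_block; apply: inE_1.
- move=> Z1 Z2 h1 h2; have := inE_mul h1 h2.
  by rewrite mulmx_block !mulmx0 !mul0mx !mul1mx !mulmx1 !addr0 !add0r addrC.
have -> : block_mx 1%:M (Z i j *: delta_mx i j) 0 1%:M =
          elem_mx (lshift n i) (rshift n j) (Z i j) :> 'M_(n + n).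
  apply/matrixP=> p q; rewrite elem_mxE.
  rewrite -(splitK p) -(splitK q); case: (split p) => p'; case: (split q) => q' /=;
    rewrite ?block_mxEul ?block_mxEur ?block_mxEdl ?block_mxEdr !mxE
      ?eq_lshift ?eq_rshift ?eq_lrshift ?eq_rlshift /= ?andbF ?mulr0 ?addr0 ?add0r //.
have h : lshift n i != rshift n j by rewrite eq_lrshift.
exact: (inE_elem (Z i j) h).
Qed.
Lemma inE_L n (Z : 'M[R]_n) : in_E (block_mx 1%:M 0 Z 1%:M : 'M_(n + n)).
Proof.
rewrite (matrix_sum_delta Z).
elim/big_ind: _ => [||i _].
- by rewrite -scalar_mx_block; apply: inE_1.
- move=> Z1 Z2 h1 h2; have := inE_mul h1 h2.
  by rewrite mulmx_block !mulmx0 !mul0mx !mul1mx !mulmx1 !addr0 !add0r addrC.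
elim/big_ind: _ => [||j _].
- by rewrite -scalar_mx_block; apply: inE_1.
- move=> Z1 Z2 h1 h2; have := inE_mul h1 h2.
  by rewrite mulmx_block !mulmx0 !mul0mx !mul1mx !mulmx1 !addr0 !add0r addrC.
have -> : block_mx 1%:M 0 (Z i j *: delta_mx i j) 1%:M =
          elem_mx (rshift n i) (lshift n j) (Z i j) :> 'M_(n + n).
  apply/matrixP=> p q; rewrite elem_mxE.
  rewrite -(splitK p) -(splitK q); case: (split p) => p'; case: (split q) => q' /=;
    rewrite ?block_mxEul ?block_mxEur ?block_mxEdl ?block_mxEdr !mxE
      ?eq_lshift ?eq_rshift ?eq_lrshift ?eq_rlshift /= ?andbF ?mulr0 ?addr0 ?add0r //.
have h : rshift n i != lshift n j by rewrite eq_rlshift.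
exact: (inE_elem (Z i j) h).
Qed.

Lemma inE_D n (Z Z' : 'M[R]_n) : Z *m Z' = 1%:M -> Z' *m Z = 1%:M ->
  in_E (block_mx Z 0 0 Z' : 'M_(n + n)).
Proof.
move=> h1 h2.
have e : block_mx Z 0 0 Z' =
  block_mx 1%:M Z 0 1%:M *m block_mx 1%:M 0 (- Z') 1%:M *m block_mx 1%:M Z 0 1%:M
  *m (block_mx 1%:M (- 1%:M) 0 1%:M *m block_mx 1%:M 0 1%:M 1%:M
      *m block_mx 1%:M (- 1%:M) 0 1%:M) :> 'M_(n + n).
  rewrite !mulmx_block !mulmx0 !mul0mx !mul1mx !mulmx1 ?mulmxN ?mulNmx ?h1 ?h2 ?mulmxN ?mulNmx ?mul1mx ?mulmx1.
  by rewrite ?(mulNmx, mulmxN, h1, h2, subrr, addNr, add0r, addr0, oppr0, mulmx0, mul0mx, mul1mx, mulmx1, sub0r, opprK).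
rewrite e; repeat apply: inE_mul; by [apply: inE_U | apply: inE_L].
Qed.
End E.



Section Core.
Variable R : nzRingType.

Definition mx3 (a b c d e f g h k : R) : 'M[R]_3 :=
  \matrix_(i < 3, j < 3) nth 0 (nth [::] [:: [:: a; b; c]; [:: d; e; f]; [:: g; h; k]] i) j.

Lemma mul3 a1 a2 a3 a4 a5 a6 a7 a8 a9 b1 b2 b3 b4 b5 b6 b7 b8 b9 :
  mx3 a1 a2 a3 a4 a5 a6 a7 a8 a9 *m mx3 b1 b2 b3 b4 b5 b6 b7 b8 b9 =
  mx3 (a1*b1 + a2*b4 + a3*b7) (a1*b2 + a2*b5 + a3*b8) (a1*b3 + a2*b6 + a3*b9)
      (a4*b1 + a5*b4 + a6*b7) (a4*b2 + a5*b5 + a6*b8) (a4*b3 + a5*b6 + a6*b9)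
      (a7*b1 + a8*b4 + a9*b7) (a7*b2 + a8*b5 + a9*b8) (a7*b3 + a8*b6 + a9*b9).
Proof.
apply/matrixP=> i j; rewrite !mxE !big_ord_recl big_ord0 !mxE addr0 /=.
by case: i => [[|[|[|//]]] ?]; case: j => [[|[|[|//]]] ?]; rewrite /= ?addrA.
Qed.

Lemma one3 : (1%:M : 'M[R]_3) = mx3 1 0 0 0 1 0 0 0 1.
Proof.
apply/matrixP=> i j; rewrite !mxE.
by case: i => [[|[|[|//]]] ?]; case: j => [[|[|[|//]]] ?].
Qed.

Lemma blk3 (c : R) :
  (block_mx (mx3 c 0 0 0 1 0 0 0 1) 0 0 1%:M : 'M_(3 + 3)) = diag1 5 c.
Proof.
apply/matrixP=> p q; rewrite -(splitK p) -(splitK q).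
case: (split p) => p'; case: (split q) => q' /=;
rewrite ?block_mxEul ?block_mxEur ?block_mxEdl ?block_mxEdr !mxE.
- by case: p' => [[|[|[|//]]] ?]; case: q' => [[|[|[|//]]] ?].
- by case: p' => [[|[|[|//]]] ?]; case: q' => [[|[|[|//]]] ?].
- by case: p' => [[|[|[|//]]] ?]; case: q' => [[|[|[|//]]] ?].
- by case: p' => [[|[|[|//]]] ?]; case: q' => [[|[|[|//]]] ?].
Qed.

End Core.



Section Core2.
Variable R : nzRingType.

Lemma core (x1 y1 x2 y2 : R) : y1 * x1 = 1 -> y2 * x2 = 1 ->
  in_E (diag1 5 (x1 * x2 * y1 * y2 + (1 - x1 * y1) * y2 + x1 * (1 - x2 * y2))).
Proof.
move=> h1 h2.
set e1 := 1 - x1 * y1; set e2 := 1 - x2 * y2.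
have ex1 : e1 * x1 = 0 by rewrite /e1 mulrBl mul1r -mulrA h1 mulr1 subrr.
have ex2 : e2 * x2 = 0 by rewrite /e2 mulrBl mul1r -mulrA h2 mulr1 subrr.
have ye1 : y1 * e1 = 0 by rewrite /e1 mulrBr mulr1 mulrA h1 mul1r subrr.
have ye2 : y2 * e2 = 0 by rewrite /e2 mulrBr mulr1 mulrA h2 mul1r subrr.
have ee1 : e1 * e1 = e1 by rewrite {2}/e1 mulrBr mulr1 mulrA ex1 mul0r subr0.
have ee2 : e2 * e2 = e2 by rewrite {2}/e2 mulrBr mulr1 mulrA ex2 mul0r subr0.
have s1 : x1 * y1 + e1 * e1 = 1 by rewrite ee1 /e1 addrC subrK.
have s1' : e1 * e1 + x1 * y1 = 1 by rewrite addrC.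
have s2 : x2 * y2 + e2 * e2 = 1 by rewrite ee2 /e2 addrC subrK.
have s2' : e2 * e2 + x2 * y2 = 1 by rewrite addrC.
pose H1 := mx3 x1 e1 0 0 y1 0 0 0 1.
pose H1' := mx3 y1 0 0 e1 x1 0 0 0 1.
pose H2 := mx3 x2 0 e2 0 1 0 0 0 y2.
pose H2' := mx3 y2 0 0 0 1 0 e2 0 x2.
have i1 : H1 *m H1' = 1%:M.
  by rewrite one3 mul3 !(mulr0, mul0r, addr0, add0r, mulr1, mul1r) ex1 ye1 h1 s1.
have i1' : H1' *m H1 = 1%:M.
  by rewrite one3 mul3 !(mulr0, mul0r, addr0, add0r, mulr1, mul1r) ex1 ye1 h1 s1'.
have i2 : H2 *m H2' = 1%:M.
  by rewrite one3 mul3 !(mulr0, mul0r, addr0, add0r, mulr1, mul1r) ex2 ye2 h2 s2.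
have i2' : H2' *m H2 = 1%:M.
  by rewrite one3 mul3 !(mulr0, mul0r, addr0, add0r, mulr1, mul1r) ex2 ye2 h2 s2'.
have C : H1 *m H2 *m (H1' *m H2') =
   mx3 (x1 * x2 * y1 * y2 + e1 * y2 + x1 * e2) 0 0 0 1 0 0 0 1.
  rewrite !mul3 !(mulr0, mul0r, addr0, add0r, mulr1, mul1r).
  rewrite ?ex1 ?ye1 ?h1 ?ye2 ?h2.
  by rewrite !mulrA ee1 ye1 mul0r -(mulrA x1 e2 e2) ee2 -(mulrA x1 e2 x2) ex2 mulr0.
have := inE_mul (inE_mul (inE_D i1 i1') (inE_D i2 i2'))
          (inE_D (Z := H1' *m H2') (Z' := H2 *m H1) _ _).
rewrite !mulmx_block !(mulmx0, mul0mx, addr0, add0r) C.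
have k1 : H1' *m H2' *m (H2 *m H1) = 1%:M.
  by rewrite mulmxA -(mulmxA H1') i2' mulmx1 i1'.
have k2 : H2 *m H1 *m (H1' *m H2') = 1%:M.
  by rewrite mulmxA -(mulmxA H2) i1 mulmx1 i2.
rewrite k1 blk3; apply => //.
Qed.
End Core2.



Section Prod.
Variable R : nzRingType.

Lemma prod_split (I : eqType) (r : seq I) (k : I) (G G' : I -> R) :
  uniq r -> k \in r -> (forall t, t != k -> G t = G' t) -> G' k = 1 ->
  (forall t, GRing.comm (G k) (G' t)) ->
  \prod_(t <- r) G t = \prod_(t <- r) G' t * G k.
Proof.
move=> + + hGG hk hc; elim: r => [//|a r IH] /= /andP[ar ur].
rewrite inE !big_cons; case: (eqVneq k a) => [ka _ | ka /= kr].
  subst k.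
  have hcp : GRing.comm (G a) (\prod_(t <- r) G' t) by apply: commr_prod => t _; exact: hc.
  rewrite hk mul1r -hcp.
  congr (_ * _); apply: eq_big_seq => t tr; apply: hGG.
  by apply/eqP => ta; move: ar; rewrite -ta tr.
by rewrite IH // mulrA hGG // eq_sym.
Qed.

Lemma prod_set1 m (S : {set 'I_m}) (k : 'I_m) (F : 'I_m -> R) :
  k \in S -> (forall t, GRing.comm (F k) (F t)) ->
  \prod_(t in S) F t = \prod_(t in S :\ k) F t * F k.
Proof.
move=> kS hc; rewrite big_mkcond [in RHS]big_mkcond /=.
have -> : F k = (if k \in S then F k else 1) by rewrite kS.
apply: prod_split.
- exact: index_enum_uniq.
- exact: mem_index_enum.
- by move=> t tk; rewrite in_setD1 tk.
- by rewrite in_setD1 eqxx.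
- by move=> t; rewrite kS; case: (_ \in _) => //; exact: commr1.
Qed.

End Prod.



Lemma lin6 (V : zmodType) (o X E2 Y E1 Z : V) :
  o + (X - E2) + (Y - E1) + Z = o - E2 - E1 + Z + Y + X.
Proof.
rewrite -!addrA; congr (o + _).
rewrite (addrCA X); congr (_ + _).
rewrite (addrCA Y) (addrCA X); congr (_ + _).
by rewrite [X + _]addrC (addrC Y) addrA.
Qed.

Lemma key_id (R : nzRingType) (a b c d : R) :
  b * a = 1 -> d * c = 1 -> c * b = b * c -> a * d = d * a -> d * b = b * d ->
  (1 + (d - 1) * (1 - a * b)) * (1 + (a - 1) * (1 - c * d)) =
  a * c * b * d + (d - a * b * d) + (a - a * c * d).
Proof.
move=> hba hdc hcb had hdb.
set E1 := 1 - a * b; set E2 := 1 - c * d.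
have E1a : E1 * a = 0 by rewrite /E1 mulrBl mul1r -mulrA hba mulr1 subrr.
have dE2 : d * E2 = 0 by rewrite /E2 mulrBr mulr1 mulrA hdc mul1r subrr.
have dE1 : d * E1 = E1 * d.
  by rewrite /E1 mulrBl mulrBr mul1r mulr1 mulrA -had -mulrA hdb mulrA.
have -> : a * c * b * d = (1 - E1) * (1 - E2).
  by rewrite /E1 /E2 !subKr -!mulrA (mulrA c) hcb -!mulrA.
have -> : d - a * b * d = E1 * d by rewrite /E1 mulrBl mul1r.
have -> : a - a * c * d = a * E2 by rewrite /E2 mulrBr mulr1 mulrA.
have t : (d - 1) * E1 * ((a - 1) * E2) = E1 * E2.
  rewrite mulrA -(mulrA _ E1) (mulrBr E1) mulr1 E1a sub0r mulrN mulNr (mulrBl E1) mul1r dE1.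
  by rewrite mulrBl -mulrA dE2 mulr0 sub0r opprK.
rewrite mulrDl mul1r (mulrDr ((d - 1) * E1)) mulr1 t (mulrBl E2) (mulrBl E1) !mul1r dE1 addrA.
have -> : (1 - E1) * (1 - E2) = 1 - E2 - E1 + E1 * E2.
  rewrite (mulrBl (1 - E2)) mul1r (mulrBr E1) mulr1.
  by rewrite [- (E1 - _)]opprD opprK addrA.
exact: lin6.
Qed.

Lemma phiM (R : nzRingType) (p r s : R) : p * p = p -> GRing.comm p r ->
  (1 - p + p * r) * (1 - p + p * s) = 1 - p + p * (r * s).
Proof.
move=> pp cr.
have p1 : p * (1 - p) = 0 by rewrite mulrBr mulr1 pp subrr.
have p2 : (1 - p) * p = 0 by rewrite mulrBl mul1r pp subrr.
have prp : p * r * p = p * r by rewrite -mulrA -cr mulrA pp.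
rewrite mulrDl !mulrDr !mulr1 (mulrN (1 - p)) (mulrBl p) mul1r pp subrr subr0.
rewrite (mulrA (1 - p)) (mulrBl p) mul1r pp subrr mul0r addr0.
rewrite (mulrN (p * r)) -!mulrA -cr !mulrA pp addrN add0r.
rewrite -!mulrA (mulrA r p s) -cr -mulrA (mulrA p p) pp.
by [].
Qed.

Lemma phi_lin (R : nzRingType) (p a b c : R) :
  (1 - p + p * a) + ((1 - p + p * b) - (1 - p + p * c)) = 1 - p + p * (a + (b - c)).
Proof.
rewrite [1 - p + p * b]addrC addrKA mulrDr mulrBr. by rewrite -[in LHS]addrA.
Qed.

Definition phi (R : nzRingType) (p r : R) := 1 - p + p * r.

Lemma phiM' (R : nzRingType) (p r s : R) : p * p = p -> GRing.comm p r ->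
  phi p r * phi p s = phi p (r * s).
Proof. exact: phiM. Qed.

Lemma phi_lin' (R : nzRingType) (p a b c : R) :
  phi p a + (phi p b - phi p c) = phi p (a + (b - c)).
Proof. exact: phi_lin. Qed.

Lemma phi1 (R : nzRingType) (p : R) : phi p 1 = 1.
Proof. by rewrite /phi mulr1 subrK. Qed.



Theorem theorem3p4 (K : fieldType) (m : nat) (A : algType K)
    (x y : 'I_m -> A) :
  (2 <= m)%N -> is_jacobson_algebra x y ->
  forall (J : {set 'I_m}) (i j : 'I_m),
    (2 <= #|J|)%N -> i \in J -> j \in J -> i != j ->
    diag_in_Einf (theta x y J i j).
Proof.
move=> _ [[hyx hc] _] J i j _ iJ jJ ij.
have cxx k l : GRing.comm (x k) (x l).
  by case: (eqVneq k l) => [->//|kl]; case: (hc k l kl).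
have cyy k l : GRing.comm (y k) (y l).
  by case: (eqVneq k l) => [->//|kl]; case: (hc k l kl).
have cxy k l : k != l -> GRing.comm (x k) (y l) by move=> kl; case: (hc k l kl).
have cyx k l : k != l -> GRing.comm (y k) (x l).
  by move=> kl; apply: commr_sym; apply: cxy; rewrite eq_sym.
pose e := jac_e x y.
have eE k : e k = 1 - x k * y k by [].
have cxe k l : k != l -> GRing.comm (x l) (e k).
  move=> kl; rewrite eE; apply: commrB; first exact: commr1.
  by apply: commrM; [exact: cxx | apply: cxy; rewrite eq_sym].
have cye k l : k != l -> GRing.comm (y l) (e k).
  move=> kl; rewrite eE; apply: commrB; first exact: commr1.
  by apply: commrM; [apply: cyx; rewrite eq_sym | exact: cyy].
have cee k l : GRing.comm (e k) (e l).
  case: (eqVneq k l) => [->//|kl]; rewrite [e l]eE.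
  have lk : l != k by rewrite eq_sym.
  apply: commrB; first exact: commr1.
  by apply: commrM; apply: commr_sym; [exact: cxe | exact: cye].
have eee k : e k * e k = e k.
  by rewrite eE mulrBr mulr1 (mulrBl (x k * y k)) mul1r -!mulrA (mulrA (y k)) hyx mul1r subrr subr0.
pose S := J :\ i :\ j.
pose p := jac_eI x y S.
have pE : p = \prod_(t in S) e t by [].
have Si t : t \in S -> t != i /\ t != j.
  by rewrite !in_setD1 => /and3P[-> -> _].
have cpx : GRing.comm p (x i) /\ GRing.comm p (y i) /\ GRing.comm p (x j) /\ GRing.comm p (y j).
  rewrite pE; split; [|split; [|split]]; apply: commr_sym; apply: commr_prod => t /Si [ti tj].
  - exact: cxe. - exact: cye. - exact: cxe. - exact: cye.
have pp : p * p = p /\ forall t, GRing.comm (e t) p.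
  rewrite pE; apply: (big_rec (fun a => a * a = a /\ forall t, GRing.comm (e t) a)).
    by split; [rewrite mulr1 | move=> t; exact: commr1].
  move=> t a _ [aa ca]; split.
    by rewrite mulrA -(mulrA (e t)) -ca mulrA eee -mulrA aa.
  by move=> s; apply: commrM; [exact: cee | exact: ca].
have [pp1 cep] := pp.
have [cpxi [cpyi [cpxj cpyj]]] := cpx.
have fE : jac_eI x y (J :\ i) = p * e j.
  rewrite /jac_eI (prod_set1 (k := j)) //;
    try (by rewrite in_setD1 eq_sym ij jJ); by move=> t; exact: cee.
have gE : jac_eI x y (J :\ j) = p * e i.
  rewrite /jac_eI (prod_set1 (k := i)) //;
    try (by rewrite in_setD1 ij iJ); try (by move=> t; exact: cee).
  have -> : J :\ j :\ i = S by apply/setP=> t; rewrite !in_setD1 andbCA.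
  by [].
have cpe k : GRing.comm p (e k) by apply: commr_sym; exact: cep.
have cyi1 : GRing.comm p (y i - 1) by apply: commrB => //; exact: commr1.
have cxj1 : GRing.comm p (x j - 1) by apply: commrB => //; exact: commr1.
have h1 : 1 + (y i - 1) * (p * e j) = phi p (1 + (y i - 1) * e j).
  rewrite /phi [in RHS](mulrDr p) mulr1 addrA subrK (mulrA (y i - 1)).
  by rewrite -cyi1 (mulrA p).
have h2 : 1 + (x j - 1) * (p * e i) = phi p (1 + (x j - 1) * e i).
  rewrite /phi [in RHS](mulrDr p) mulr1 addrA subrK (mulrA (x j - 1)).
  by rewrite -cxj1 (mulrA p).
have thE : theta x y J i j = phi p ((1 + (y i - 1) * e j) * (1 + (x j - 1) * e i)).
  rewrite /theta fE gE h1 h2 phiM' //.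
  apply: commrD; first exact: commr1.
  exact: commrM.
rewrite thE !eE key_id; try exact: hyx; try exact: cyy;
  try (by apply: cxy); try (by apply: cxy; rewrite eq_sym).
have hc1 : phi p (y j) * phi p (x j) = 1 by rewrite phiM' // hyx phi1.
have hc2 : phi p (y i) * phi p (x i) = 1 by rewrite phiM' // hyx phi1.
have := core hc1 hc2.
have cmm : forall a b, GRing.comm p a -> GRing.comm p b -> GRing.comm p (a * b).
  by move=> a b; exact: commrM.
rewrite (mulrBl (phi p (y i))) mul1r (mulrBr (phi p (x j))) mulr1.
have c1 : GRing.comm p (x j * x i) by exact: cmm.
have c2 : GRing.comm p (x j * x i * y j) by exact: cmm.
have c3 : GRing.comm p (x j * y j) by exact: cmm.
have c4 : GRing.comm p (x i * y i) by exact: cmm.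
rewrite !phiM' //.
rewrite phi_lin' phi_lin' (mulrA (x j) (x i) (y i)).
  by move=> hE; exists 5%N.
Qed.
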